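(* Let $e_1,e_2,e_3$ be nonzero integers with $e_1+e_2+e_3=0$, let $n$ be a positive integer, and let $\Lambda=(d_1,d_2,d_3)$ be a triple of nonzero square-free integers with $d_1d_2d_3$ a square. Then $D^{(n)}_\Lambda(\mathbb{R})\neq\emptyset$ if and only if all of the following hold: $d_1>0$ if $e_2>0,e_3<0$; $d_2>0$ if $e_3>0,e_1<0$; $d_3>0$ if $e_1>0,e_2<0$.
   Context: $D^{(n)}_\Lambda$ is the curve in $\mathbb{P}^3$ with coordinates $(t,u_1,u_2,u_3)$ defined by the three equations $e_1nt^2+d_2u_2^2-d_3u_3^2=0$, $e_2nt^2+d_3u_3^2-d_1u_1^2=0$, $e_3nt^2+d_1u_1^2-d_2u_2^2=0$ (the 2-covering of $y^2=x(x-e_1n)(x+e_2n)$ attached to $\Lambda$). *)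

(* Defs.v *)
From Stdlib Require Import Reals ZArith.
Open Scope R_scope.

Definition squarefree (d : Z) : Prop :=
  forall m : Z, Z.divide (m * m)%Z d -> Z.abs m = 1%Z.

Definition is_square (d : Z) : Prop := exists k : Z, d = (k * k)%Z.

Definition D_eqs (e1 e2 e3 n d1 d2 d3 : Z) (t u1 u2 u3 : R) : Prop :=
  IZR e1 * IZR n * t^2 + IZR d2 * u2^2 - IZR d3 * u3^2 = 0 /\
  IZR e2 * IZR n * t^2 + IZR d3 * u3^2 - IZR d1 * u1^2 = 0 /\
  IZR e3 * IZR n * t^2 + IZR d1 * u1^2 - IZR d2 * u2^2 = 0.

(* D^{(n)}_Lambda(R) is nonempty: there is a point of P^3(R), i.e. a nonzero
   real 4-tuple (up to scaling, irrelevant since the equations are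
   homogeneous), satisfying the equations. *)
Definition D_real_nonempty (e1 e2 e3 n d1 d2 d3 : Z) : Prop :=
  exists t u1 u2 u3 : R,
    (t <> 0 \/ u1 <> 0 \/ u2 <> 0 \/ u3 <> 0) /\
    D_eqs e1 e2 e3 n d1 d2 d3 t u1 u2 u3.

(* Main.v *)
Require Import Defs.
From Stdlib Require Import Reals ZArith Lra Lia Psatz.
Open Scope R_scope.

Lemma zero_of_sq (d x : R) : d <> 0 -> d * x^2 = 0 -> x = 0.
Proof.
  intros Hd H. apply Rmult_integral in H. destruct H as [H|H]; [contradiction|].
  nra.
Qed.

Lemma fwd_core (E1 E2 E3 T A B C : R) :
  E2 > 0 -> E3 < 0 -> E1 + E2 + E3 = 0 -> E1*T + B - C = 0 -> E2*T + C - A = 0 ->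
  A <= 0 -> T >= 0 -> (0 <= B \/ 0 <= C) -> T = 0 /\ A = 0 /\ B = 0 /\ C = 0.
Proof.
  intros H2 H3 Hs H1 Hb HA HT [HB|HC].
  - assert (E3 * T <= 0) by nra.
    assert (HT0 : T = 0) by nra. subst T. lra.
  - assert (E2 * T >= 0) by nra.
    assert (HT0 : T = 0) by nra. subst T. lra.
Qed.

Lemma rot e1 e2 e3 n d1 d2 d3 :
  D_real_nonempty e1 e2 e3 n d1 d2 d3 -> D_real_nonempty e2 e3 e1 n d2 d3 d1.
Proof.
  intros (t & u1 & u2 & u3 & Hnz & H1 & H2 & H3).
  exists t, u2, u3, u1. split; [tauto|]. unfold D_eqs. lra.
Qed.

Lemma fwd e1 e2 e3 n d1 d2 d3 :
  (e1 + e2 + e3)%Z = 0%Z -> (0 < n)%Z ->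
  d1 <> 0%Z -> d2 <> 0%Z -> d3 <> 0%Z -> (0 < d1 * d2 * d3)%Z ->
  D_real_nonempty e1 e2 e3 n d1 d2 d3 -> (0 < e2)%Z /\ (e3 < 0)%Z -> (0 < d1)%Z.
Proof.
  intros Hs Hn H1 H2 H3 Hp (t & u1 & u2 & u3 & Hnz & Q1 & Q2 & Q3) [He2 He3].
  destruct (Z_lt_le_dec 0 d1) as [|Hd1]; [assumption|exfalso].
  assert (Hd1' : (d1 < 0)%Z) by lia.
  assert (Hor : (0 < d2)%Z \/ (0 < d3)%Z).
  { destruct (Z_lt_le_dec 0 d2); [left; auto|].
    destruct (Z_lt_le_dec 0 d3); [right; auto|].
    exfalso. assert (d2 < 0)%Z by lia. assert (d3 < 0)%Z by lia.
    assert (0 < d1 * d2)%Z by nia. nia. }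
  apply IZR_lt in Hd1', He2, He3, Hn.
  assert (HsR : IZR e1 + IZR e2 + IZR e3 = 0).
  { rewrite <- !plus_IZR, Hs. reflexivity. }
  assert (HA : IZR d1 * u1^2 <= 0) by nra.
  assert (HT : IZR n * t^2 >= 0) by nra.
  assert (HBC : 0 <= IZR d2 * u2^2 \/ 0 <= IZR d3 * u3^2).
  { destruct Hor as [Ho|Ho]; apply IZR_lt in Ho; [left|right]; nra. }
  destruct (fwd_core (IZR e1) (IZR e2) (IZR e3) (IZR n * t^2)
     (IZR d1 * u1^2) (IZR d2 * u2^2) (IZR d3 * u3^2)) as (T0 & A0 & B0 & C0);
   try lra; try nra.
  apply zero_of_sq in T0; [|lra].
  apply zero_of_sq in A0; [|lra].
  apply zero_of_sq in B0; [|apply not_0_IZR; auto].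
  apply zero_of_sq in C0; [|apply not_0_IZR; auto].
  lra.
Qed.

Lemma div_nonneg (x d : R) : 0 <= x * d -> d <> 0 -> 0 <= x / d.
Proof.
  intros H Hd.
  replace (x / d) with ((x * d) * / (d * d)) by (field; auto).
  apply Rmult_le_pos; [auto|]. left. apply Rinv_0_lt_compat.
  destruct (Rlt_dec 0 d); [nra|]. assert (d < 0) by lra. nra.
Qed.

Lemma build e1 e2 e3 n d1 d2 d3 (A B C : R) :
  d1 <> 0%Z -> d2 <> 0%Z -> d3 <> 0%Z ->
  0 <= A * IZR d1 -> 0 <= B * IZR d2 -> 0 <= C * IZR d3 ->
  IZR e1 * IZR n + B - C = 0 -> IZR e2 * IZR n + C - A = 0 ->
  IZR e3 * IZR n + A - B = 0 -> D_real_nonempty e1 e2 e3 n d1 d2 d3.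
Proof.
  intros H1 H2 H3 HA HB HC E1 E2 E3.
  apply not_0_IZR in H1, H2, H3.
  pose proof (div_nonneg _ _ HA H1) as PA.
  pose proof (div_nonneg _ _ HB H2) as PB.
  pose proof (div_nonneg _ _ HC H3) as PC.
  exists 1, (sqrt (A / IZR d1)), (sqrt (B / IZR d2)), (sqrt (C / IZR d3)).
  split; [left; lra|].
  unfold D_eqs. rewrite !pow2_sqrt by assumption.
  replace (IZR d1 * (A / IZR d1)) with A by (field; auto).
  replace (IZR d2 * (B / IZR d2)) with B by (field; auto).
  replace (IZR d3 * (C / IZR d3)) with C by (field; auto).
  rewrite pow1. lra.
Qed.

Theorem lemma2p4 (e1 e2 e3 n d1 d2 d3 : Z) :
  e1 <> 0%Z -> e2 <> 0%Z -> e3 <> 0%Z -> (e1 + e2 + e3)%Z = 0%Z ->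
  (0 < n)%Z ->
  d1 <> 0%Z -> d2 <> 0%Z -> d3 <> 0%Z ->
  squarefree d1 -> squarefree d2 -> squarefree d3 ->
  is_square (d1 * d2 * d3)%Z ->
  (D_real_nonempty e1 e2 e3 n d1 d2 d3 <->
   (((0 < e2)%Z /\ (e3 < 0)%Z -> (0 < d1)%Z) /\
    ((0 < e3)%Z /\ (e1 < 0)%Z -> (0 < d2)%Z) /\
    ((0 < e1)%Z /\ (e2 < 0)%Z -> (0 < d3)%Z))).
Proof.
  intros He1 He2 He3 Hs Hn H1 H2 H3 _ _ _ [k Hk].
  assert (Hp : (0 < d1 * d2 * d3)%Z).
  { assert (k <> 0)%Z by (intro; subst; rewrite Z.mul_0_r in Hk;
      apply Z.eq_mul_0 in Hk as [Hk|Hk]; [apply Z.eq_mul_0 in Hk as [|]|]; auto).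
    nia. }
  split.
  - intro HD. split; [|split].
    + apply (fwd e1 e2 e3 n d1 d2 d3); auto.
    + apply (fwd e2 e3 e1 n d2 d3 d1); auto; try lia. apply rot; auto.
    + apply (fwd e3 e1 e2 n d3 d1 d2); auto; try lia. apply rot, rot; auto.
  - intros [C1 [C2 C3]].
    pose proof (IZR_lt _ _ Hn) as HnR.
    assert (HsR : IZR e1 + IZR e2 + IZR e3 = 0).
    { rewrite <- !plus_IZR, Hs. reflexivity. }
    destruct (Z_lt_le_dec 0 d1) as [P1|P1];
    destruct (Z_lt_le_dec 0 d2) as [P2|P2];
    destruct (Z_lt_le_dec 0 d3) as [P3|P3].
    +
      assert (F1 : 0 <= IZR e1 * IZR e1 + IZR e1)
        by (rewrite <- mult_IZR, <- plus_IZR; apply IZR_le; nia).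
      assert (F3 : 0 <= IZR e3 * IZR e3 - IZR e3)
        by (rewrite <- mult_IZR, <- minus_IZR; apply IZR_le; nia).
      assert (F4 : 0 <= IZR e3 * IZR e3) by nra.
      assert (F5 : 0 <= IZR e1 * IZR e1) by nra.
      apply IZR_lt in P1, P2, P3.
      apply (build e1 e2 e3 n d1 d2 d3
        (IZR n * (IZR e1 * IZR e1 + IZR e3 * IZR e3 - IZR e3))
        (IZR n * (IZR e1 * IZR e1 + IZR e3 * IZR e3))
        (IZR n * (IZR e1 * IZR e1 + IZR e1 + IZR e3 * IZR e3))); auto;
        try nra; repeat apply Rmult_le_pos; nra.
    + exfalso. assert (d3 < 0)%Z by lia. nia.
    + exfalso. assert (d2 < 0)%Z by lia. nia.
    +
      assert (d2 < 0)%Z by lia. assert (d3 < 0)%Z by lia.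
      assert (E2 : (0 < e2)%Z) by lia. assert (E3 : (e3 < 0)%Z) by lia.
      apply IZR_lt in E2, E3, H, H0.
      assert (0 < IZR e3 * IZR d2) by nra. assert (0 < IZR e2 * (- IZR d3)) by nra.
      apply (build e1 e2 e3 n d1 d2 d3 0 (IZR e3 * IZR n) (- (IZR e2 * IZR n)));
        auto; try nra.
    + exfalso. assert (d1 < 0)%Z by lia. nia.
    +
      assert (d1 < 0)%Z by lia. assert (d3 < 0)%Z by lia.
      assert (E1 : (e1 < 0)%Z) by lia. assert (E3 : (0 < e3)%Z) by lia.
      apply IZR_lt in E1, E3, H, H0.
      assert (0 < IZR e3 * (- IZR d1)) by nra. assert (0 < IZR e1 * IZR d3) by nra.
      apply (build e1 e2 e3 n d1 d2 d3 (- (IZR e3 * IZR n)) 0 (IZR e1 * IZR n));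
        auto; try nra.
    +
      assert (d1 < 0)%Z by lia. assert (d2 < 0)%Z by lia.
      assert (E1 : (0 < e1)%Z) by lia. assert (E2 : (e2 < 0)%Z) by lia.
      apply IZR_lt in E1, E2, H, H0.
      assert (0 < IZR e2 * IZR d1) by nra. assert (0 < IZR e1 * (- IZR d2)) by nra.
      apply (build e1 e2 e3 n d1 d2 d3 (IZR e2 * IZR n) (- (IZR e1 * IZR n)) 0);
        auto; try nra.
    + exfalso. assert (d1 < 0)%Z by lia. assert (d2 < 0)%Z by lia.
      assert (d3 < 0)%Z by lia. assert (0 < d1 * d2)%Z by nia. nia.
Qed.
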